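(* If $G$ is a $K_t$-minor-free graph of diameter $d$ and order $n$, with a resolving set of size $k$, then $n\leq (dk+1)^{t-1}+1$.
   Context: A set $R$ of vertices of a graph $G$ is a resolving set if for each pair $u,v$ of distinct vertices there is $x\in R$ with $d(x,u)\neq d(x,v)$. A graph is $K_t$-minor-free if the complete graph $K_t$ is not a minor of it. *)

(* Defs.v *)
From mathcomp Require Import all_boot.
Set Implicit Arguments. Unset Strict Implicit. Unset Printing Implicit Defensive.

Section Graph.
Variables (T : finType) (e : rel T).

Definition simple_graph : Prop := symmetric e /\ irreflexive e.

Definition connected_graph : Prop := forall x y : T, connect e x y.

Definition walk_of_len (k : nat) (x y : T) : bool :=
  [exists p : k.-tuple T, path e x p && (last x p == y)].

(* graph distance d(x,y): length of a shortest x-y path (meaningful when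
   G is connected; a shortest path has fewer than #|T| edges) *)
Definition dist (x y : T) : nat :=
  find (fun k => walk_of_len k x y) (iota 0 #|T|).

Definition has_diameter (d : nat) : Prop :=
  connected_graph /\ (forall x y, dist x y <= d) /\ (exists x y, dist x y = d).

Definition resolving (R : {set T}) : Prop :=
  forall u v : T, u != v -> exists2 x, x \in R & dist x u != dist x v.

Definition induced (B : {set T}) : rel T :=
  [rel a b | [&& a \in B, b \in B & e a b]].

Definition has_Kt_minor (t : nat) : Prop :=
  exists B : 'I_t -> {set T},
    [/\ forall i, B i != set0,
        forall i, forall x y, x \in B i -> y \in B i -> connect (induced (B i)) x y,
        forall i j, i != j -> [disjoint B i & B j] &
        forall i j, i != j -> exists x y, [/\ x \in B i, y \in B j & e x y]].

End Graph.

(* Main.v *)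
Require Import Defs.
From mathcomp Require Import all_boot zify.
Set Implicit Arguments. Unset Strict Implicit. Unset Printing Implicit Defensive.

Lemma walk_le (T : finType) (e : rel T) k x y :
  walk_of_len e k x y -> dist e x y <= k.
Proof.
move=> H; rewrite /dist.
have hs := find_size (fun k => walk_of_len e k x y) (iota 0 #|T|).
rewrite size_iota in hs.
case: (leqP (find (fun k => walk_of_len e k x y) (iota 0 #|T|)) k) => // hk.
have hkT : k < #|T| by apply: leq_trans hk hs.
have := before_find 0 hk; rewrite nth_iota // add0n H //.
Qed.

Lemma walk_cat (T : finType) (e : rel T) m n x y z :
  walk_of_len e m x y -> walk_of_len e n y z -> walk_of_len e (m + n) x z.
Proof.
move=> /existsP[p /andP[pp /eqP lp]] /existsP[q /andP[pq /eqP lq]].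
apply/existsP; exists [tuple of p ++ q].
by rewrite cat_path pp /= last_cat lp pq lq eqxx.
Qed.

Lemma walk_edge (T : finType) (e : rel T) y z :
  e y z -> walk_of_len e 1 y z.
Proof.
move=> H; apply/existsP; exists [tuple z] => /=; by rewrite H eqxx.
Qed.

Lemma walk0 (T : finType) (e : rel T) x : walk_of_len e 0 x x.
Proof. by apply/existsP; exists [tuple] => /=. Qed.

Lemma walk0_eq (T : finType) (e : rel T) x y : walk_of_len e 0 x y -> x = y.
Proof. by move=> /existsP[p]; rewrite tuple0 /= => /eqP. Qed.

Lemma walk_pred (T : finType) (e : rel T) k x y :
  walk_of_len e k.+1 x y -> exists y', walk_of_len e k x y' /\ e y' y.
Proof.
move=> /existsP[[s hs]] /=; move: hs; case/lastP: s => [|q z] //.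
rewrite size_rcons eqSS => hq; rewrite rcons_path last_rcons => /andP[/andP[pq ez] /eqP <-].
exists (last x q); split => //; apply/existsP; exists (Tuple hq) => /=; by rewrite pq eqxx.
Qed.

Lemma dist_walk (T : finType) (e : rel T) x y :
  connect e x y -> walk_of_len e (dist e x y) x y.
Proof.
move=> /connectP[p pp ->]; case: (shortenP pp) => q pq uq _.
have hq : size q < #|T|.
  move/card_uniqP: uq => /= <-; exact: max_card.
have hw : walk_of_len e (size q) x (last x q).
  by apply/existsP; exists (Tuple (eqxx (size q))) => /=; rewrite pq eqxx.
have hh : has (fun k => walk_of_len e k x (last x q)) (iota 0 #|T|).
  by apply/hasP; exists (size q) => //; rewrite mem_iota.
have hf := hh; rewrite has_find size_iota in hf.
by have := nth_find 0 hh; rewrite nth_iota ?add0n.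
Qed.

Lemma dist_triangle (T : finType) (e : rel T) x y z :
  connect e x y -> connect e y z -> dist e x z <= dist e x y + dist e y z.
Proof.
move=> h1 h2; apply: walk_le; apply: walk_cat; exact: dist_walk.
Qed.

Lemma dist_edge (T : finType) (e : rel T) x y z :
  connect e x y -> e y z -> dist e x z <= dist e x y + 1.
Proof.
move=> h1 h2; apply: walk_le; apply: walk_cat (walk_edge h2); exact: dist_walk.
Qed.

Lemma dist_xx (T : finType) (e : rel T) x : dist e x x = 0.
Proof. by apply/eqP; rewrite -leqn0; apply: walk_le; apply: walk0. Qed.

Lemma dist0_eq (T : finType) (e : rel T) x y :
  connect e x y -> dist e x y = 0 -> x = y.
Proof. by move=> h h0; have := dist_walk h; rewrite h0 => /walk0_eq. Qed.

Lemma walk_connect (T : finType) (e : rel T) k x y :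
  walk_of_len e k x y -> connect e x y.
Proof. by move=> /existsP[p /andP[pp /eqP <-]]; apply/connectP; exists p. Qed.

Lemma dist_pred (T : finType) (e : rel T) x y n :
  connect e x y -> dist e x y = n.+1 ->
  exists y', dist e x y' = n /\ e y' y.
Proof.
move=> h hn; have := dist_walk h; rewrite hn => /walk_pred[y' [w ey]].
exists y'; split => //; apply/eqP; rewrite eqn_leq walk_le //=.
have := dist_edge (walk_connect w) ey; rewrite hn addn1 ltnS //.
Qed.
Lemma key_le t a b x y : a < t -> b < t ->
  (x * t + a <= y * t + b) = (x < y) || ((x == y) && (a <= b)).
Proof.
move=> ha hb; case: (ltngtP x y) => hxy /=.
- apply/idP; have : x.+1 * t <= y * t by rewrite leq_mul2r hxy orbT.
  rewrite mulSn; lia.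
- apply/negbTE; rewrite -ltnNge; have : y.+1 * t <= x * t by rewrite leq_mul2r hxy orbT.
  rewrite mulSn; lia.
- by subst; rewrite leq_add2l.
Qed.

Definition Wf (T : finType) (e : rel T) t (c : 'I_t -> T) (r : 'I_t -> nat) M
  (l : 'I_t) (y : T) := dist e (c l) y + (M - r l).
Definition Kf (T : finType) (e : rel T) t (c : 'I_t -> T) (r : 'I_t -> nat) M
  (l : 'I_t) (y : T) := Wf e c r M l y * t + l.
Definition Zf (T : finType) (e : rel T) t (c : 'I_t -> T) (r : 'I_t -> nat) M
  (i : 'I_t) : {set T} := [set y | [forall l, Kf e c r M i y <= Kf e c r M l y]].

Lemma Kf_le (T : finType) (e : rel T) t (c : 'I_t -> T) (r : 'I_t -> nat) M i l y :
  (Kf e c r M i y <= Kf e c r M l y) =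
  (Wf e c r M i y < Wf e c r M l y) || ((Wf e c r M i y == Wf e c r M l y) && (i <= l)).
Proof. by rewrite /Kf key_le. Qed.

Lemma Z_star (T : finType) (e : rel T) t (c : 'I_t -> T) (r : 'I_t -> nat) M :
  connected_graph e -> (forall l, r l <= M) ->
  forall i y, y \in Zf e c r M i -> connect (induced e (Zf e c r M i)) (c i) y.
Proof.
move=> conn hM i y; move: {2}(dist e (c i) y) (erefl (dist e (c i) y)) => n.
elim: n y => [|n IH] y hn hy.
  by rewrite (dist0_eq (conn _ _) hn) connect0.
have [y' [hy' ey]] := dist_pred (conn _ _) hn.
have hy'Z : y' \in Zf e c r M i.
  rewrite inE; apply/forallP => l; move: hy; rewrite inE => /forallP/(_ l).
  rewrite !Kf_le /Wf hn hy'.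
  have := dist_edge (conn (c l) y') ey.
  have := hM l; have := hM i; lia.
apply: connect_trans (IH y' hy' hy'Z) _; apply: connect1.
by rewrite /induced /= hy'Z hy ey.
Qed.

Lemma Z_center (T : finType) (e : rel T) t (c : 'I_t -> T) (r : 'I_t -> nat) M :
  connected_graph e -> (forall l, r l <= M) ->
  (forall i j, i != j -> exists v, dist e (c i) v <= r i /\ r j < dist e (c j) v) ->
  forall i, c i \in Zf e c r M i.
Proof.
move=> conn hM ha i; rewrite inE; apply/forallP => l.
case: (eqVneq l i) => [-> //|hli].
rewrite leqNgt; apply/negP => /ltnW; rewrite Kf_le /Wf dist_xx => hle.
have hil : i != l by rewrite eq_sym.
have [v [h1 h2]] := ha i l hil.
have := dist_triangle (conn (c l) (c i)) (conn (c i) v).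
have := hM l; have := hM i; lia.
Qed.

Lemma Z_eq (T : finType) (e : rel T) t (c : 'I_t -> T) (r : 'I_t -> nat) M i j y :
  y \in Zf e c r M i -> y \in Zf e c r M j -> i = j.
Proof.
rewrite !inE => /forallP/(_ j) h1 /forallP/(_ i) h2.
move: h1 h2; rewrite !Kf_le => h1 h2; apply: val_inj => /=; lia.
Qed.

Lemma Z_owner (T : finType) (e : rel T) t (c : 'I_t -> T) (r : 'I_t -> nat) M
  (i0 : 'I_t) y : exists o, y \in Zf e c r M o.
Proof.
case: (@arg_minnP _ i0 xpredT (fun l => Kf e c r M l y)) => // o _ h.
by exists o; rewrite inE; apply/forallP => l; apply: h.
Qed.

Lemma Z_path (T : finType) (e : rel T) t (c : 'I_t -> T) (r : 'I_t -> nat) M :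
  symmetric e -> connected_graph e -> (forall l, r l <= M) ->
  (forall i j, i != j -> exists v, dist e (c i) v <= r i /\ r j < dist e (c j) v) ->
  forall i j, i != j -> forall y,
  (forall l, l != i -> l != j -> Wf e c r M j y < Wf e c r M l y) ->
  y \in Zf e c r M i ->
  exists a b, [/\ a \in Zf e c r M i, b \in Zf e c r M j & e a b].
Proof.
move=> sym conn hM ha i j hij y.
move: {2}(dist e (c j) y) (erefl (dist e (c j) y)) => n.
elim: n y => [|n IH] y hn inv hy.
  rewrite -(dist0_eq (conn _ _) hn) in hy.
  have := Z_eq hy (Z_center conn hM ha j) => hh.
  by rewrite hh eqxx in hij.
have [y' [hy' ey]] := dist_pred (conn _ _) hn.
have inv' : forall l, l != i -> l != j -> Wf e c r M j y' < Wf e c r M l y'.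
  move=> l hli hlj; have := inv l hli hlj; rewrite /Wf hn hy'.
  have := dist_edge (conn (c l) y') ey.
  have := hM l; have := hM j; lia.
have [o ho] := @Z_owner _ e _ c r M i y'.
case: (eqVneq o j) => [hoj|hoj].
  by exists y, y'; rewrite -hoj sym.
case: (eqVneq o i) => [hoi|hoi].
  by apply: (IH y' hy' inv'); rewrite -hoi.
exfalso; have := inv' o hoi hoj.
move: ho; rewrite inE => /forallP/(_ j); rewrite Kf_le.
have := ltn_ord o; have := ltn_ord j; lia.
Qed.

Lemma minor_from_balls (T : finType) (e : rel T) t (c : 'I_t -> T) (r : 'I_t -> nat) M :
  symmetric e -> connected_graph e -> (forall l, r l <= M) ->
  (forall i j, i != j -> exists v, dist e (c i) v <= r i /\ r j < dist e (c j) v) ->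
  (forall i j, i != j -> exists v, [/\ dist e (c i) v <= r i, dist e (c j) v <= r j &
      forall l, l != i -> l != j -> r l < dist e (c l) v]) ->
  has_Kt_minor e t.
Proof.
move=> sym conn hM ha hb.
exists (Zf e c r M); split.
- by move=> i; apply/set0Pn; exists (c i); apply: Z_center.
- move=> i x y hx hy.
  have hs : connect_sym (induced e (Zf e c r M i)).
    apply: sym_connect_sym => a b; by rewrite /induced /= sym andbCA.
  apply: connect_trans (Z_star conn hM hy).
  by rewrite hs; apply: Z_star.
- move=> i j hij; rewrite disjoint_subset; apply/subsetP => y hy; rewrite inE.
  apply/negP => hy2; have := Z_eq hy hy2 => hh; by rewrite hh eqxx in hij.
- move=> i j hij.
  have [v [h1 h2 h3]] := hb i j hij.
  have [o ho] := @Z_owner _ e _ c r M i v.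
  have hoij : (o == i) || (o == j).
    case: (eqVneq o i) => // hoi; case: (eqVneq o j) => // hoj.
    have := h3 o hoi hoj; move: ho; rewrite inE => /forallP/(_ i); rewrite Kf_le /Wf.
    have := hM o; have := hM i; have := ltn_ord o; have := ltn_ord i; lia.
  case/orP: hoij => /eqP ho'; subst o.
  + apply: (Z_path sym conn hM ha hij) ho => l hli hlj.
    have := h3 l hli hlj; rewrite /Wf; have := hM l; have := hM j; lia.
  + have hji : j != i by rewrite eq_sym.
    have inv : forall l, l != j -> l != i -> Wf e c r M i v < Wf e c r M l v.
      move=> l hlj hli; have := h3 l hli hlj; rewrite /Wf; have := hM l; have := hM i; lia.
    have [a [b [ha' hb' eab]]] := Z_path sym conn hM ha hji inv ho.
    by exists b, a; rewrite sym.
Qed.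
Definition shatters (U : finType) (F : {set {set U}}) (A : {set U}) : bool :=
  [forall I : {set U}, (I \subset A) ==> [exists S in F, S :&: A == I]].
Definition shset (U : finType) (F : {set {set U}}) := [set A | shatters F A].

Lemma shattersP (U : finType) (F : {set {set U}}) (A : {set U}) :
  reflect (forall I : {set U}, I \subset A -> exists2 S, S \in F & S :&: A = I) (shatters F A).
Proof.
apply: (iffP forallP) => [h I hI | h I].
  by have /implyP/(_ hI)/exists_inP[S hS /eqP] := h I; exists S.
apply/implyP => hI; have [S hS hSI] := h I hI; apply/exists_inP; exists S => //.
exact/eqP.
Qed.

Lemma shset_mono (U : finType) (F G : {set {set U}}) :
  F \subset G -> shset F \subset shset G.
Proof.
move=> /subsetP hFG; apply/subsetP => A; rewrite !inE => /shattersP h.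
apply/shattersP => I hI; have [S hS hSI] := h I hI; exists S => //; exact: hFG.
Qed.

Lemma pajor (U : finType) (F : {set {set U}}) : #|F| <= #|shset F|.
Proof.
move: {2}#|F| (leqnn #|F|) => n; elim: n F => [|n IH] F hF.
  by move: hF; rewrite leqn0 => /eqP ->.
case: (leqP #|F| 1) => hF1.
  case: (set_0Vmem F) => [-> | [S0 hS0]]; first by rewrite cards0.
  apply: (leq_trans hF1); rewrite card_gt0; apply/set0Pn; exists set0.
  rewrite inE; apply/shattersP => I; rewrite subset0 => /eqP ->.
  by exists S0 => //; rewrite setI0.
have [S1 [S2 [h1 h2 h12]]] := card_gt1P hF1.
have [a ha] : exists a, (a \in S1) != (a \in S2).
  case: (boolP [exists a, (a \in S1) != (a \in S2)]) => [/existsP//|/existsPn hn].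
  move/eqP: h12 => [];
  by apply/setP => x; have := hn x; rewrite negbK => /eqP.
pose F1 := [set S in F | a \in S]; pose F0 := F :\: F1.
have hsub : F1 \subset F by apply/subsetP => S; rewrite inE => /andP[].
have hF10 : #|F1| + #|F0| = #|F| by rewrite -(cardsID F1 F) (setIidPr hsub).
have hF1n : 0 < #|F1|.
  rewrite card_gt0; apply/set0Pn.
  by case/orP: (orbN (a \in S1)) => hS; [exists S1 | exists S2];
     rewrite inE ?h1 ?h2 //=; move: ha hS; case: (a \in S1); case: (a \in S2).
have hF0n : 0 < #|F0|.
  rewrite card_gt0; apply/set0Pn.
  by case/orP: (orbN (a \in S1)) => hS; [exists S2 | exists S1];
     rewrite !inE ?h1 ?h2 //= andbT; move: ha hS; case: (a \in S1); case: (a \in S2).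
have IH1 := IH F1 ltac:(lia).
have IH0 := IH F0 ltac:(lia).
have m0 : forall S, S \in F0 -> (S \in F) && (a \notin S).
  by move=> S; rewrite !inE; case: (S \in F); case: (a \in S).
have m1 : forall S, S \in F1 -> (S \in F) && (a \in S).
  by move=> S; rewrite !inE.
pose X := shset F0; pose Y := shset F1.
have hX : forall A, A \in X -> a \notin A.
  move=> A; rewrite inE => /shattersP h; apply/negP => haA.
  have [S hS hSA] := h A (subxx A).
  move/m0: hS => /andP[_ /negP hn]; apply: hn.
  have : a \in S :&: A by rewrite hSA.
  by rewrite inE => /andP[].
have hY : forall A, A \in Y -> a \notin A.
  move=> A; rewrite inE => /shattersP h; apply/negP => haA.
  have [S hS hSA] := h set0 (sub0set A).
  move/m1: hS => /andP[_ haS].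
  have : a \in S :&: A by rewrite inE haS haA.
  by rewrite hSA inE.
pose Z := [set a |: A | A in X :&: Y].
have hZ : #|Z| = #|X :&: Y|.
  apply: card_in_imset => A B; rewrite !in_setI => /andP[hA _] /andP[hB _] hAB.
  by rewrite -(setU1K (hX A hA)) -(setU1K (hX B hB)) hAB.
have hXYsub : X :|: Y \subset shset F.
  by rewrite subUset !shset_mono // subsetDl.
have hZsub : Z \subset shset F.
  apply/subsetP => B /imsetP[A hAXY ->]; move: hAXY; rewrite in_setI => /andP[hA hA'].
  rewrite inE; apply/shattersP => I hI.
  case: (boolP (a \in I)) => haI.
  - have [S hS hSI] : exists2 S, S \in F1 & S :&: A = I :\ a.
      by rewrite inE in hA'; apply: (shattersP _ _ hA'); rewrite subDset.
    exists S; first by move/m1: hS => /andP[].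
    move/m1: hS => /andP[_ haS].
    by rewrite setIUr hSI (setIidPr _) ?sub1set // setD1K.
  - have [S hS hSI] : exists2 S, S \in F0 & S :&: A = I.
      rewrite inE in hA; apply: (shattersP _ _ hA).
      by apply/subsetP => x hx; move/subsetP: hI => /(_ x hx); rewrite !inE;
         case/orP => // /eqP hxa; move: haI; rewrite -hxa hx.
    exists S; first by move/m0: hS => /andP[].
    move/m0: hS => /andP[_ haS].
    rewrite setIUr hSI; apply/setP => x; rewrite !inE.
    by case: (eqVneq x a) => [->|]; rewrite ?(negbTE haS) ?andbF ?orbF.
have hdisj : (X :|: Y) :&: Z = set0.
  apply/setP => B; rewrite in_setI in_setU in_set0; apply/negP => /andP[hB /imsetP[A _ hAB]].
  have haB : a \in B by rewrite hAB setU11.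
  by case/orP: hB => hB; [have := hX _ hB | have := hY _ hB]; rewrite haB.
have hU : #|(X :|: Y) :|: Z| <= #|shset F| by apply: subset_leq_card; rewrite subUset hXYsub.
have := cardsUI (X :|: Y) Z; rewrite hdisj cards0 addn0 hZ => hc.
have := cardsUI X Y.
rewrite /X /Y /Z in hU hc *; lia.
Qed.
Lemma ffact_le_exp m k : m ^_ k <= m ^ k.
Proof.
elim: k => [|k IH]; first by rewrite ffactn0 expn0.
by rewrite ffactnSr expnSr leq_mul // leq_subr.
Qed.

Lemma bin_le_exp m k : 'C(m, k) <= m ^ k.
Proof.
apply: leq_trans (ffact_le_exp m k); rewrite -bin_ffact.
by rewrite leq_pmulr // fact_gt0.
Qed.

Lemma exp_mono a b q : a <= b -> a ^ q <= b ^ q.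
Proof. by move=> h; elim: q => [|q IH]; rewrite ?expn0 // !expnS leq_mul. Qed.

Lemma card_small_sets (U : finType) p :
  #|[set A : {set U} | #|A| <= p]| <= (#|U| + 1) ^ p.
Proof.
elim: p => [|p IH].
  rewrite expn0; apply: leq_trans (_ : #|[set (set0 : {set U})]| <= 1).
    apply: subset_leq_card; apply/subsetP => A; rewrite !inE leqn0 cards_eq0 //.
  by rewrite cards1.
have -> : [set A : {set U} | #|A| <= p.+1] =
          [set A : {set U} | #|A| <= p] :|: [set A : {set U} | #|A| == p.+1].
  by apply/setP => A; rewrite !inE leq_eqVlt ltnS orbC.
rewrite cardsU card_draws.
have := bin_le_exp #|U| p.+1.
have h2 : #|U| ^ p <= (#|U| + 1) ^ p by rewrite exp_mono // leq_addr.
rewrite !expnS => h3.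
have h4 : #|U| * #|U| ^ p <= #|U| * (#|U| + 1) ^ p by rewrite leq_mul2l h2 orbT.
rewrite mulnDl mul1n; lia.
Qed.

Lemma memSI (U : finType) (S A I : {set U}) x :
  S :&: A = I -> x \in A -> (x \in S) = (x \in I).
Proof. by move=> <- hx; rewrite inE hx andbT. Qed.

Unset Implicit Arguments.

Theorem theorem5 (T : finType) (e : rel T) (t d k : nat) (R : {set T}) :
  simple_graph e ->
  ~ has_Kt_minor e t ->
  has_diameter e d ->
  resolving e R -> #|R| = k ->
  #|T| <= (d * k + 1) ^ (t - 1) + 1.
Proof.
move=> [sym _] hK [conn [hdle _]] hR hk.
case: t hK => [|p] hK.
  by exfalso; apply: hK; exists (fun _ => set0); split => -[].
rewrite subSS subn0; apply: leq_trans (leq_addr 1 _).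
pose Om := ({x : T | x \in R} * 'I_d)%type.
pose pat (v : T) : {set Om} := [set q : Om | dist e (val q.1) v <= q.2].
pose F := [set pat v | v in T].
have patinj : injective pat.
  move=> u v huv; apply/eqP; apply/negPn/negP => /hR[x hx hne].
  have key : forall a b, dist e x a < dist e x b -> pat a != pat b.
    move=> a b hab; have hlt : dist e x a < d by apply: leq_trans hab (hdle _ _).
    apply/negP => /eqP/setP/(_ (exist _ x hx, Ordinal hlt)); rewrite !inE /=.
    by rewrite leqnn leqNgt hab.
  case: (ltngtP (dist e x u) (dist e x v)) => h.
  - by move: (key _ _ h); rewrite huv eqxx.
  - by move: (key _ _ h); rewrite huv eqxx.
  - by rewrite h eqxx in hne.
have hF : #|F| = #|T| by rewrite card_imset // cardsT.
have hOm : #|{: Om}| = d * k.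
  by rewrite card_prod card_sig card_ord mulnC -hk; congr (_ * _); apply: eq_card.
rewrite -hF -hOm. apply: leq_trans (pajor F) _.
apply: leq_trans (card_small_sets Om p); apply: subset_leq_card.
apply/subsetP => A; rewrite !inE => hA; rewrite leqNgt; apply/negP => hle.
apply: hK.
pose c0 (i : 'I_p.+1) : Om := enum_val (widen_ord hle i).
have c0inj : injective c0.
  by move=> i j /enum_val_inj/(congr1 val) /= h; apply: val_inj.
have c0A : forall i, c0 i \in A by move=> i; apply: enum_valP.
pose c i := val (c0 i).1.
pose r i := nat_of_ord (c0 i).2.
have patE : forall i v, (c0 i \in pat v) = (dist e (c i) v <= r i).
  by move=> i v; rewrite inE.
apply: (minor_from_balls (c := c) (r := r) (M := d) sym conn).
- by move=> l; apply: ltnW; rewrite /r ltn_ord.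
- move=> i j hij.
  have hsub : [set c0 i] \subset A by rewrite sub1set.
  have [S hS hSI] := shattersP _ _ hA _ hsub.
  case/imsetP: hS => v _ hSv; subst S; exists v; split.
    by rewrite -patE (memSI hSI (c0A i)) set11.
  rewrite ltnNge -patE (memSI hSI (c0A j)) inE.
  by apply/negP => /eqP/c0inj hji; rewrite hji eqxx in hij.
- move=> i j hij.
  have hsub : [set c0 i; c0 j] \subset A.
    by apply/subsetP => x; rewrite !inE => /orP[] /eqP ->.
  have [S hS hSI] := shattersP _ _ hA _ hsub.
  case/imsetP: hS => v _ hSv; subst S; exists v; split.
  + by rewrite -patE (memSI hSI (c0A i)) !inE eqxx.
  + by rewrite -patE (memSI hSI (c0A j)) !inE eqxx orbT.
  + move=> l hli hlj; rewrite ltnNge -patE (memSI hSI (c0A l)) !inE.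
    apply/negP => /orP[] /eqP/c0inj h; [by rewrite h eqxx in hli | by rewrite h eqxx in hlj].
Qed.
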